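(* There exists a function $f:\mathbb{R}^{\mathbb{Z}_<}\to\mathbb{R}^{\mathbb{Z}_<}$ that satisfies $\mathrm{ED}_{\mathrm{CLASS}}$ but does not satisfy $\mathrm{ED}$.
   Context: $\mathbb{R}^{\mathbb{Z}_<}$ is the set of formal series $\sum_{i\ge -k}a_i\epsilon^i$ ($k\in\mathbb{N}\cup\{0\}$, $a_i\in\mathbb{R}$), with coefficientwise addition, Cauchy-product multiplication and lexicographic order; $|\cdot|$ is the associated absolute value. A function $f$ satisfies $\mathrm{ED}_{\mathrm{CLASS}}$ iff at every point $\mathbf{a}$ of its domain, for every $n\in\mathbb{N}$ there is $m\in\mathbb{N}$ such that $|f(\mathbf{x})-f(\mathbf{a})|<1/n$ whenever $|\mathbf{x}-\mathbf{a}|<1/m$. It satisfies $\mathrm{ED}$ iff at every point $\mathbf{c}$, for every $\iota_1\in\mathbb{R}^{\mathbb{Z}_<}$ with $\iota_1>0$ there is $\iota_2\in\mathbb{R}^{\mathbb{Z}_<}$ with $\iota_2>0$ such that $|f(\mathbf{x})-f(\mathbf{c})|<\iota_1$ whenever $|\mathbf{x}-\mathbf{c}|<\iota_2$. *)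

(* Defs.v *)
(* the non-Archimedean ordered group R^{Z_<} of formal
   Laurent series  sum_{i >= -k} a_i eps^i  with real coefficients. *)
From Stdlib Require Import Reals ZArith Lia Lra ClassicalDescription.
Open Scope R_scope.

Record LS : Type := mkLS {
  coef : Z -> R;
  coef_lb : exists k : Z, forall i : Z, (i < k)%Z -> coef i = 0 }.

Lemma LS_cst_lb (r : R) :
  exists k : Z, forall i : Z, (i < k)%Z -> (if Z.eqb i 0 then r else 0) = 0.
Proof.
  exists 0%Z; intros i Hi. destruct (Z.eqb_spec i 0); [lia|reflexivity].
Qed.

Definition LS_cst (r : R) : LS := mkLS (fun i => if Z.eqb i 0 then r else 0) (LS_cst_lb r).

Definition LS_zero : LS := LS_cst 0.

Lemma LS_opp_lb (x : LS) :
  exists k : Z, forall i : Z, (i < k)%Z -> - coef x i = 0.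
Proof.
  destruct (coef_lb x) as [k Hk]; exists k; intros i Hi; rewrite Hk; [lra|exact Hi].
Qed.

Definition LS_opp (x : LS) : LS := mkLS (fun i => - coef x i) (LS_opp_lb x).

Lemma LS_add_lb (x y : LS) :
  exists k : Z, forall i : Z, (i < k)%Z -> coef x i + coef y i = 0.
Proof.
  destruct (coef_lb x) as [k1 H1]; destruct (coef_lb y) as [k2 H2].
  exists (Z.min k1 k2); intros i Hi; rewrite H1, H2; [lra|lia|lia].
Qed.

Definition LS_add (x y : LS) : LS := mkLS (fun i => coef x i + coef y i) (LS_add_lb x y).
Definition LS_sub (x y : LS) : LS := LS_add x (LS_opp y).

Definition LS_pos (x : LS) : Prop :=
  exists n : Z, 0 < coef x n /\ forall m : Z, (m < n)%Z -> coef x m = 0.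

Definition LS_lt (x y : LS) : Prop := LS_pos (LS_sub y x).
Definition LS_le (x y : LS) : Prop := LS_lt x y \/ x = y.

Definition LS_abs (x : LS) : LS :=
  if excluded_middle_informative (LS_le LS_zero x) then x else LS_opp x.

Definition ED_CLASS (f : LS -> LS) : Prop :=
  forall a : LS, forall n : nat, (0 < n)%nat ->
    exists m : nat, (0 < m)%nat /\
      forall x : LS,
        LS_lt (LS_abs (LS_sub x a)) (LS_cst (/ INR m)) ->
        LS_lt (LS_abs (LS_sub (f x) (f a))) (LS_cst (/ INR n)).

Definition ED (f : LS -> LS) : Prop :=
  forall c : LS, forall i1 : LS, LS_lt LS_zero i1 ->
    exists i2 : LS, LS_lt LS_zero i2 /\
      forall x : LS,
        LS_lt (LS_abs (LS_sub x c)) i2 ->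
        LS_lt (LS_abs (LS_sub (f x) (f c))) i1.

(* Main.v *)
Require Import Defs.
From Stdlib Require Import Reals ZArith Lia Lra ClassicalDescription.
Open Scope R_scope.

Lemma eps_lb : exists k : Z, forall i : Z, (i < k)%Z -> (if Z.eqb i 1 then 1 else 0) = 0.
Proof. exists 0%Z; intros i Hi. destruct (Z.eqb_spec i 1); [lia|reflexivity]. Qed.
Definition epsLS : LS := mkLS (fun i => if Z.eqb i 1 then 1 else 0) eps_lb.

Definition F (x : LS) : LS :=
  if excluded_middle_informative (LS_pos x) then epsLS else LS_zero.

Lemma half_lb (x : LS) : exists k : Z, forall i : Z, (i < k)%Z -> coef x i / 2 = 0.
Proof. destruct (coef_lb x) as [k Hk]; exists k; intros i Hi; rewrite Hk; [lra|exact Hi]. Qed.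
Definition half (x : LS) : LS := mkLS (fun i => coef x i / 2) (half_lb x).

Lemma pos_ext x y : (forall i, coef x i = coef y i) -> LS_pos x -> LS_pos y.
Proof. intros H [n [H1 H2]]; exists n; split; [rewrite <- H; auto|intros m Hm; rewrite <- H; auto]. Qed.

Lemma coef_sub_zero y i : coef (LS_sub y LS_zero) i = coef y i.
Proof. simpl. destruct (Z.eqb i 0); lra. Qed.

Lemma abs_pos y : LS_pos y -> LS_abs y = y.
Proof.
  intros H. unfold LS_abs. destruct (excluded_middle_informative _) as [_|N]; auto.
  exfalso; apply N; left. unfold LS_lt. apply (pos_ext y); auto.
  intros; rewrite coef_sub_zero; auto.
Qed.

Lemma not_pos_zero y : (forall i, coef y i = 0) -> ~ LS_pos y.
Proof. intros H [n [H1 _]]; rewrite H in H1; lra. Qed.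

Lemma A y r : 0 < r -> (forall i, (i <= 0)%Z -> coef y i = 0) -> LS_lt (LS_abs y) (LS_cst r).
Proof.
  intros Hr Hy. assert (Ha : forall i, (i <= 0)%Z -> coef (LS_abs y) i = 0).
  { intros i Hi; unfold LS_abs; destruct (excluded_middle_informative _); simpl; rewrite Hy; auto; lra. }
  unfold LS_lt, LS_pos. exists 0%Z. simpl. split.
  - rewrite Ha by lia. simpl. lra.
  - intros m Hm. rewrite Ha by lia. destruct (Z.eqb_spec m 0); [lia|lra].
Qed.

Lemma B x i : (i <= 0)%Z -> coef (F x) i = 0.
Proof.
  intros Hi; unfold F; destruct (excluded_middle_informative _); simpl.
  - destruct (Z.eqb_spec i 1); [lia|lra].
  - destruct (Z.eqb i 0); lra.
Qed.

Theorem mainTheorem5 : exists f : LS -> LS, ED_CLASS f /\ ~ ED f.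
Proof.
  exists F; split.
  - intros a n Hn. exists 1%nat; split; [lia|]. intros x _.
    apply A.
    + apply Rinv_0_lt_compat, lt_0_INR; lia.
    + intros i Hi; simpl; rewrite !B by lia; lra.
  - intros H.
    assert (He : LS_pos epsLS).
    { exists 1%Z; simpl; split; [lra|]. intros m Hm; destruct (Z.eqb_spec m 1); [lia|lra]. }
    destruct (H LS_zero epsLS) as [i2 [Hp Hx]].
    { unfold LS_lt. apply (pos_ext epsLS); auto. intros; rewrite coef_sub_zero; auto. }
    assert (Hp2 : LS_pos i2).
    { apply (pos_ext (LS_sub i2 LS_zero)); auto. intros; rewrite coef_sub_zero; auto. }
    assert (Hh : LS_pos (half i2)).
    { destruct Hp2 as [n [H1 H2]]; exists n; simpl; split; [lra|intros m Hm; rewrite H2; auto; lra]. }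
    specialize (Hx (half i2)).
    assert (Fh : F (half i2) = epsLS).
    { unfold F; destruct (excluded_middle_informative _); tauto. }
    assert (F0 : F LS_zero = LS_zero).
    { unfold F; destruct (excluded_middle_informative _) as [p|]; auto.
      exfalso; revert p; apply not_pos_zero; intros; simpl; destruct (Z.eqb i 0); lra. }
    rewrite Fh, F0 in Hx.
    rewrite (abs_pos (LS_sub (half i2) LS_zero)) in Hx.
    2:{ apply (pos_ext (half i2)); auto. intros; rewrite coef_sub_zero; auto. }
    rewrite (abs_pos (LS_sub epsLS LS_zero)) in Hx.
    2:{ apply (pos_ext epsLS); auto. intros; rewrite coef_sub_zero; auto. }
    refine (not_pos_zero _ _ (Hx _)).
    + intros i; simpl. destruct (Z.eqb i 0), (Z.eqb i 1); lra.
    + unfold LS_lt. apply (pos_ext (half i2)); auto. intros i; simpl.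
      destruct (Z.eqb i 0); lra.
Qed.
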